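(* Let $w$ and $q$ be probability measures on $(\mathsf{Y},\mathcal{Y})$ with $D_{1/2}(w\|q)<\infty$. Then for all $\kappa\in\mathbb{R}_+$ and $\alpha\in(0,1)$, $$E_{w_\alpha^q}\big[|\xi_\alpha|^\kappa\big]^{1/\kappa}\le3^{1/\kappa}\,\frac{((1-\alpha)D_\alpha(w\|q))\vee\kappa}{\alpha(1-\alpha)},$$ where $\xi_\alpha=\ln\frac{dw_{ac}}{dq}-E_{w_\alpha^q}\big[\ln\frac{dw_{ac}}{dq}\big]$ and $w_{ac}$ is the component of $w$ absolutely continuous with respect to $q$ in the Lebesgue decomposition of $w$.
   Context: Rényi divergence $D_\alpha(w\|q)=\frac{1}{\alpha-1}\ln E_\nu[(\frac{dw}{d\nu})^\alpha(\frac{dq}{d\nu})^{1-\alpha}]$ for $\alpha\ne1$, $D_1$ the Kullback–Leibler divergence, $\nu$ any dominating probability measure. For $\alpha\in(0,1)$ with $D_\alpha(w\|q)<\infty$, the tilted probability measure $w_\alpha^q$ is defined by $\frac{dw_\alpha^q}{d\nu}=e^{(1-\alpha)D_\alpha(w\|q)}(\frac{dw}{d\nu})^\alpha(\frac{dq}{d\nu})^{1-\alpha}$. *)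

(* Defs.v *)
From mathcomp Require Import all_boot all_order all_algebra.
From mathcomp Require Import all_classical all_reals all_analysis.
Set Implicit Arguments. Unset Strict Implicit. Unset Printing Implicit Defensive.
Import Order.TTheory GRing.Theory Num.Theory.
Local Open Scope classical_set_scope.
Local Open Scope ring_scope.

(* Setting: w and q are given by densities f, g : Y -> R (nonnegative,
   measurable) w.r.t. a dominating probability measure nu, i.e.
   w(A) = \int_A f dnu, q(A) = \int_A g dnu.                            *)

Section renyi.
Context {R : realType} {d : measure_display} {Y : measurableType d}.
Variable nu : probability Y R.
Variables f g : Y -> R.

(* E_nu[(dw/dnu)^a (dq/dnu)^(1-a)]  (convention 0 `^ a = 0 for a <> 0) *)
Definition hellinger_int (a : R) : \bar R :=
  (\int[nu]_x ((f x `^ a) * (g x `^ (1 - a)))%:E)%E.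

Definition renyi_div (a : R) : \bar R :=
  if hellinger_int a == 0%E then +oo%E
  else ((a - 1)^-1 * ln (fine (hellinger_int a)))%:E.

(* density of the tilted measure w_a^q with respect to nu:
   e^{(1-a) D_a(w||q)} f^a g^(1-a) = f^a g^(1-a) / E_nu[f^a g^(1-a)] *)
Definition tilted_dens (a : R) (x : Y) : R :=
  (f x `^ a) * (g x `^ (1 - a)) / fine (hellinger_int a).

Definition tilted_expect (a : R) (phi : Y -> \bar R) : \bar R :=
  (\int[nu]_x ((tilted_dens a x)%:E * phi x))%E.

(* ln (dw_ac/dq): on {g > 0} the Radon-Nikodym derivative of the part of
   w absolutely continuous w.r.t. q is f/g.  (Outside the support of the
   tilted measure, i.e. where f = 0 or g = 0, the value is irrelevant since
   the tilted density vanishes there.) *)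
Definition log_lr (x : Y) : R := ln (f x / g x).

Definition xi (a : R) (x : Y) : R :=
  log_lr x - fine (tilted_expect a (fun y => (log_lr y)%:E)).

End renyi.

(* Main.v *)
Require Import Defs.
From mathcomp Require Import all_boot all_order all_algebra.
From mathcomp Require Import all_classical all_reals all_analysis.
From mathcomp Require Import measurable_realfun ring lra.
Import Order.TTheory GRing.Theory Num.Theory.
Local Open Scope classical_set_scope.
Local Open Scope ring_scope.

Section aux.
Context {R : realType}.

Lemma expR_tangent (x z : R) : expR z * (1 + (x - z)) <= expR x.
Proof.
have -> : expR x = expR z * expR (x - z).
  by rewrite -expRD; congr expR; rewrite addrC subrK.
by rewrite ler_wpM2l ?expR_ge0 ?expR_ge1Dx.
Qed.

Lemma expR_conv (t x y : R) : 0 <= t -> t <= 1 ->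
  expR (t * x + (1 - t) * y) <= t * expR x + (1 - t) * expR y.
Proof.
move=> t0 t1; set z := t * x + (1 - t) * y.
have e : forall E : R, E = t * (E * (1 + (x - z))) + (1 - t) * (E * (1 + (y - z))).
  by move=> E; rewrite /z; ring.
rewrite {1}(e (expR z)); apply: lerD; apply: ler_wpM2l => //; try lra;
  exact: expR_tangent.
Qed.

Lemma pow_bound (x k M : R) : 0 <= x -> 0 < k -> 0 < M ->
  x `^ k <= M `^ k * expR (- k) * expR (k / M * x).
Proof.
move=> x0 k0 M0.
have [->|xn0] := eqVneq x 0.
  by rewrite powR0 ?gt_eqF // !mulr_ge0 ?powR_ge0 ?expR_ge0.
have xp : 0 < x by rewrite lt_neqAle eq_sym xn0 x0.
rewrite /powR (gt_eqF xp) (gt_eqF M0) -!expRD ler_expR.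
have h := @le_ln1Dx R (x / M - 1).
have hy : -1 < x / M - 1 by have := divr_gt0 xp M0; lra.
move: (h hy); rewrite addrC subrK lnM ?posrE ?invr_gt0 // lnV ?posrE // => h2.
have h3 : k * (ln x - ln M) <= k * (x / M - 1) by rewrite ler_wpM2l // ltW.
have e : k / M * x = k * (x / M) by rewrite mulrAC mulrA.
rewrite e; lra.
Qed.

End aux.

Section main.
Context {R : realType} {d : measure_display} {Y : measurableType d}.
Variable nu : probability Y R.
Variables f g : Y -> R.
Hypothesis mf : measurable_fun setT f.
Hypothesis mg : measurable_fun setT g.
Hypothesis f0 : forall x, 0 <= f x.
Hypothesis g0 : forall x, 0 <= g x.
Hypothesis intf : nu.-integrable setT (EFin \o f).
Hypothesis intg : nu.-integrable setT (EFin \o g).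
Hypothesis If1 : Rintegral nu setT f = 1.
Hypothesis Ig1 : Rintegral nu setT g = 1.

Definition intR (h : Y -> R) := nu.-integrable setT (EFin \o h).
Definition RI (h : Y -> R) := Rintegral nu setT h.

Lemma intR_lin (a b : R) {h1 h2 : Y -> R} : intR h1 -> intR h2 ->
  intR (fun x => a * h1 x + b * h2 x).
Proof.
move=> i1 i2; apply: (eq_integrable measurableT _ _ _ (integrableD measurableT
  (integrableZl measurableT a i1) (integrableZl measurableT b i2))) => x _.
by rewrite /= EFinD !EFinM.
Qed.

Lemma RI_lin (a b : R) {h1 h2 : Y -> R} : intR h1 -> intR h2 ->
  RI (fun x => a * h1 x + b * h2 x) = a * RI h1 + b * RI h2.
Proof.
move=> i1 i2; rewrite /RI RintegralD //.
- by rewrite !RintegralZl.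
- by apply: (eq_integrable measurableT _ _ _ (integrableZl measurableT a i1)) => x _; rewrite /= EFinM.
- by apply: (eq_integrable measurableT _ _ _ (integrableZl measurableT b i2)) => x _; rewrite /= EFinM.
Qed.

Lemma intR_dom {h h2 : Y -> R} : measurable_fun setT h -> (forall x, `|h x| <= h2 x) ->
  intR h2 -> intR h.
Proof.
move=> mh hh i2; apply: (le_integrable measurableT _ _ i2).
  exact/measurable_EFinP.
move=> x _ /=; rewrite lee_fin (le_trans (hh x)) //.
by rewrite ler_norm.
Qed.

Lemma RI_le {h1 h2 : Y -> R} : intR h1 -> intR h2 -> (forall x, h1 x <= h2 x) -> RI h1 <= RI h2.
Proof. by move=> i1 i2 h; apply: le_Rintegral. Qed.

Lemma RI_ext (h1 h2 : Y -> R) : (forall x, h1 x = h2 x) -> RI h1 = RI h2.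
Proof. by move=> h; apply: eq_Rintegral => x _; rewrite h. Qed.

Lemma intR_ext (h1 h2 : Y -> R) : (forall x, h1 x = h2 x) -> intR h1 -> intR h2.
Proof. by move=> h; apply: (eq_integrable measurableT (EFin \o h1)) => // x _; rewrite /= h. Qed.

Lemma intR_Zl (a : R) (h : Y -> R) : intR h -> intR (fun x => a * h x).
Proof.
move=> i; have := intR_lin a 0 i i; apply: intR_ext => x; by rewrite mul0r addr0.
Qed.

Lemma RI_Zl (a : R) (h : Y -> R) : intR h -> RI (fun x => a * h x) = a * RI h.
Proof.
move=> i; rewrite -(RI_ext (fun x => a * h x + 0 * h x)) ?RI_lin // ?mul0r ?addr0 //.
by move=> x; rewrite mul0r addr0.
Qed.

Lemma intR_D (h1 h2 : Y -> R) : intR h1 -> intR h2 -> intR (fun x => h1 x + h2 x).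
Proof. move=> i1 i2; have := intR_lin 1 1 i1 i2; apply: intR_ext => x; by rewrite !mul1r. Qed.

Lemma RI_D (h1 h2 : Y -> R) : intR h1 -> intR h2 -> RI (fun x => h1 x + h2 x) = RI h1 + RI h2.
Proof.
move=> i1 i2; rewrite -(RI_ext (fun x => 1 * h1 x + 1 * h2 x)) ?RI_lin // ?mul1r //.
by move=> x; rewrite !mul1r.
Qed.

Lemma RI_EFin (h : Y -> R) : intR h -> (\int[nu]_x (h x)%:E)%E = (RI h)%:E.
Proof. by move=> i; rewrite /RI /Rintegral fineK // (integrable_fin_num measurableT i). Qed.

Definition Sx x := (0 < f x) && (0 < g x).
Definition Q (a : R) x := f x `^ a * g x `^ (1 - a).
Definition LL x := ln (f x) - ln (g x).

Lemma QE {a x} : 0 < a < 1 -> Q a x =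
  if Sx x then expR (a * ln (f x) + (1 - a) * ln (g x)) else 0.
Proof.
move=> /andP[a0 a1]; rewrite /Q /Sx.
have [fp|fle] := ltP 0 (f x); last first.
  have -> : f x = 0 by apply/eqP; rewrite eq_le fle f0.
  by rewrite powR0 ?gt_eqF // mul0r.
have [gp|gle] /= := ltP 0 (g x); last first.
  have -> : g x = 0 by apply/eqP; rewrite eq_le gle g0.
  by rewrite (@powR0 _ (1 - a)) ?mulr0 // subr_eq0 gt_eqF.
by rewrite /powR !gt_eqF // -expRD.
Qed.

Lemma Q_ge0 a x : 0 <= Q a x.
Proof. by rewrite mulr_ge0 ?powR_ge0. Qed.

Lemma mQ a : measurable_fun setT (Q a).
Proof.
by apply: measurable_funM; apply: measurableT_comp (measurable_powR _) _.
Qed.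

Lemma mLL : measurable_fun setT LL.
Proof.
by apply: measurable_funB; apply: measurableT_comp (@measurable_ln R) _.
Qed.

Lemma Q_le a x : 0 < a < 1 -> Q a x <= a * f x + (1 - a) * g x.
Proof.
move=> a01; have /andP[a0 a1] := a01; rewrite QE //.
case: ifPn => [/andP[fp gp]|_]; last first.
  by rewrite addr_ge0 // mulr_ge0 // ?subr_ge0 ltW.
have := expR_conv a (ln (f x)) (ln (g x)) (ltW a0) (ltW a1).
by rewrite !lnK ?posrE.
Qed.

Lemma intQ {a} : 0 < a < 1 -> intR (Q a).
Proof.
move=> a01; have /andP[a0 a1] := a01.
apply: (intR_dom (mQ a) _ (intR_lin a (1 - a) intf intg)) => x.
by rewrite ger0_norm ?Q_ge0 ?Q_le.
Qed.


Definition K a := RI (Q a).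

Lemma hellE a : 0 < a < 1 -> hellinger_int nu f g a = (K a)%:E.
Proof. by move=> a01; rewrite /hellinger_int -RI_EFin //; exact: intQ. Qed.

Lemma K_ge0 a : 0 <= K a.
Proof. by apply: Rintegral_ge0 => x _; exact: Q_ge0. Qed.

Lemma K_le1 a : 0 < a < 1 -> K a <= 1.
Proof.
move=> a01; apply: le_trans (RI_le (intQ a01) (intR_lin a (1 - a) intf intg)
  (fun x => Q_le a x a01)) _.
by rewrite RI_lin // /RI If1 Ig1; lra.
Qed.

Lemma interp (h : Y -> R) (th a b : R) : 0 < a < 1 -> 0 < b < 1 ->
  0 <= th <= 1 -> 0 < K a -> (forall x, Sx x -> 0 < h x) ->
  (forall x, 0 <= h x) -> intR h -> RI h = 1 ->
  (forall x, Sx x -> b * ln (f x) + (1 - b) * ln (g x) =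
     th * (a * ln (f x) + (1 - a) * ln (g x)) + (1 - th) * ln (h x)) ->
  K b <= K a `^ th.
Proof.
move=> a01 b01 /andP[t0 t1] Ka hp h0 ih Ih ide.
set c1 := K a `^ th * th / K a; set c2 := K a `^ th * (1 - th).
have c1p : 0 <= c1 by rewrite /c1 !mulr_ge0 ?powR_ge0 // invr_ge0 ltW.
have c2p : 0 <= c2 by rewrite /c2 !mulr_ge0 ?powR_ge0 // subr_ge0.
have pt : forall x, Q b x <= c1 * Q a x + c2 * h x.
  move=> x; rewrite (QE b01) (QE a01); case: ifPn => Sxx; last first.
    by rewrite mulr0 add0r mulr_ge0.
  rewrite ide //; set E := a * ln (f x) + (1 - a) * ln (g x).
  have -> : expR (th * E + (1 - th) * ln (h x)) =
      expR (th * ln (K a)) * expR (th * (E - ln (K a)) + (1 - th) * ln (h x)).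
    by rewrite -expRD; congr expR; ring.
  apply: le_trans.
    apply: ler_wpM2l; first exact: expR_ge0.
    exact: expR_conv.
  rewrite expRD expRN !lnK ?posrE ?hp // /c1 /c2 /powR gt_eqF //.
  by rewrite le_eqVlt; apply/orP; left; apply/eqP; ring.
apply: le_trans (RI_le (intQ b01) (intR_lin c1 c2 (intQ a01) ih) pt) _.
rewrite RI_lin ?intQ // Ih -/(K a) /c1 /c2.
have Kn0 : K a != 0 by rewrite gt_eqF.
rewrite le_eqVlt; apply/orP; left; apply/eqP; field.
by [].
Qed.

Lemma interp_up a b : 0 < a -> a < b -> b < 1 -> 0 < K a ->
  K b <= K a `^ ((1 - b) / (1 - a)).
Proof.
move=> a0 ab b1 Ka.
have a01 : 0 < a < 1 by rewrite a0 /=; lra.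
have b01 : 0 < b < 1 by apply/andP; split; lra.
have a1 : 1 - a != 0 by rewrite subr_eq0 gt_eqF //; lra.
apply: (interp f) => //.
- apply/andP; split; first by rewrite divr_ge0 //; lra.
  by rewrite ler_pdivrMr; lra.
- by move=> x /andP[].
- by move=> x _; field.
Qed.

Lemma interp_down a b : 0 < b -> b < a -> a < 1 -> 0 < K a ->
  K b <= K a `^ (b / a).
Proof.
move=> b0 ba a1 Ka.
have a01 : 0 < a < 1 by apply/andP; split; lra.
have b01 : 0 < b < 1 by apply/andP; split; lra.
have an0 : a != 0 by rewrite gt_eqF //; lra.
apply: (interp g) => //.
- apply/andP; split; first by rewrite divr_ge0 //; lra.
  by rewrite ler_pdivrMr; lra.
- by move=> x /andP[].
- by move=> x _; field.
Qed.


Lemma req_le (x y : R) : x = y -> x <= y.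
Proof. by move->. Qed.

Lemma abs_le_exp (s y : R) : 0 < s ->
  expR (s * `|y|) <= expR (s * y) + expR (- s * y).
Proof.
move=> s0; rewrite mulNr; have [y0|y0] := lerP 0 y.
  by rewrite ger0_norm // lerDl expR_ge0.
by rewrite ltr0_norm // mulrN lerDr expR_ge0.
Qed.

Lemma pLL (F : R -> R) a x : 0 < a < 1 ->
  Q a x * F (log_lr f g x) = Q a x * F (LL x).
Proof.
move=> a01; rewrite (QE a01); case: ifPn => [/andP[fp gp]|]; last by rewrite !mul0r.
by rewrite /log_lr /LL lnM ?posrE ?invr_gt0 // lnV ?posrE.
Qed.

Lemma Qexp a t x : 0 < a < 1 -> 0 < a + t < 1 ->
  Q a x * expR (t * LL x) = Q (a + t) x.
Proof.
move=> a01 at01; rewrite (QE a01) (QE at01); case: ifPn => _; last by rewrite mul0r.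
by rewrite -expRD /LL; congr expR; ring.
Qed.

Lemma intQLL a s : 0 < s -> 0 < a - s -> a + s < 1 ->
  intR (fun x => Q a x * LL x).
Proof.
move=> s0 as0 as1.
have a01 : 0 < a < 1 by apply/andP; split; lra.
have p1 : 0 < a + s < 1 by apply/andP; split; lra.
have p2 : 0 < a + - s < 1 by apply/andP; split; lra.
apply: (intR_dom _ _ (intR_lin s^-1 s^-1 (intQ p1) (intQ p2))).
  exact: measurable_funM (mQ a) mLL.
move=> x; rewrite normrM (ger0_norm (Q_ge0 _ _)) -(Qexp a s x a01 p1) -(Qexp a (- s) x a01 p2).
rewrite -mulrDr -mulrDr mulrCA ler_wpM2l ?Q_ge0 //.
have -> : `|LL x| = s^-1 * (s * `|LL x|) by rewrite mulKf // gt_eqF.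
rewrite ler_wpM2l ?invr_ge0 ?ltW //.
have := abs_le_exp s (LL x) s0.
have := expR_ge1Dx (s * `|LL x|).
lra.
Qed.

Lemma jensen a t : 0 < a < 1 -> 0 < a + t < 1 -> intR (fun x => Q a x * LL x) ->
  0 < K a ->
  expR (t * (RI (fun x => Q a x * LL x) / K a)) * K a <= K (a + t).
Proof.
move=> a01 at01 im Ka.
set m := RI (fun x => Q a x * LL x) / K a.
set c1 := expR (t * m) * (1 - t * m); set c2 := expR (t * m) * t.
have pt : forall x, c1 * Q a x + c2 * (Q a x * LL x) <= Q (a + t) x.
  move=> x; rewrite -(Qexp a t x a01 at01).
  have -> : c1 * Q a x + c2 * (Q a x * LL x) =
      Q a x * (expR (t * m) * (1 + (t * LL x - t * m))) by rewrite /c1 /c2; ring.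
  by rewrite ler_wpM2l ?Q_ge0 // expR_tangent.
apply: le_trans (RI_le (intR_lin c1 c2 (intQ a01) im) (intQ at01) pt).
rewrite RI_lin ?intQ // -/(K a).
have -> : RI (fun x => Q a x * LL x) = m * K a by rewrite /m divfK // gt_eqF.
by rewrite /c1 /c2 le_eqVlt; apply/orP; left; apply/eqP; ring.
Qed.


Lemma main_est a k mx M m : 0 < a < 1 -> 0 < k -> 0 < K a ->
  mx = Num.max (- ln (K a)) k -> M = mx / (a * (1 - a)) ->
  m = RI (fun x => Q a x * LL x) / K a ->
  intR (fun x => Q a x * `|LL x - m| `^ k) /\
  RI (fun x => Q a x * `|LL x - m| `^ k) <= 2 * M `^ k * K a.
Proof.
move=> a01 k0 Ka emx eM em; have /andP[a0 a1] := a01.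
set c := - ln (K a) in emx.
have c0 : 0 <= c by rewrite /c oppr_ge0 ln_le0 // K_le1.
have mxk : k <= mx by rewrite emx le_max lexx orbT.
have mxc : c <= mx by rewrite emx le_max lexx.
have mx0 : 0 < mx by apply: lt_le_trans k0 mxk.
have aa : 0 < a * (1 - a) by apply: mulr_gt0; lra.
have M0 : 0 < M by rewrite eM; apply: divr_gt0.
set s := k / M.
have s0 : 0 < s by apply: divr_gt0.
have an0 : a != 0 by rewrite gt_eqF.
have a1n0 : 1 - a != 0 by rewrite subr_eq0 gt_eqF.
have mxn0 : mx != 0 by rewrite gt_eqF.
have es : s = k * (a * (1 - a)) / mx.
  by rewrite /s eM; field; rewrite ?an0 ?a1n0 ?mxn0.
have sle : s <= a * (1 - a).
  by rewrite es ler_pdivrMr // mulrC ler_wpM2l // ltW.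
have sa : s < a by nra.
have s1a : s < 1 - a by nra.
have p1 : 0 < a + s < 1 by apply/andP; split; lra.
have p2 : 0 < a + - s < 1 by apply/andP; split; lra.
have im := intQLL a s s0 (ltac:(lra) : 0 < a - s) (ltac:(lra) : a + s < 1).
have E1 : K (a + s) <= K a * expR (s * c / (1 - a)).
  apply: le_trans (interp_up a (a + s) a0 (ltac:(lra) : a < a + s) (ltac:(lra)) Ka) _.
  have -> : K a * expR (s * c / (1 - a)) = expR (ln (K a) + s * c / (1 - a)).
    by rewrite expRD lnK // posrE.
  rewrite /powR gt_eqF // ler_expR le_eqVlt; apply/orP; left; apply/eqP.
  by rewrite /c; field.
have E2 : K (a + - s) <= K a * expR (s * c / a).
  apply: le_trans (interp_down a (a + - s) (ltac:(lra) : 0 < a + - s) (ltac:(lra)) a1 Ka) _.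
  have -> : K a * expR (s * c / a) = expR (ln (K a) + s * c / a).
    by rewrite expRD lnK // posrE.
  rewrite /powR gt_eqF // ler_expR le_eqVlt; apply/orP; left; apply/eqP.
  by rewrite /c; field.
have J1 := jensen a s a01 p1 im Ka; rewrite -em in J1.
have J2 := jensen a (- s) a01 p2 im Ka; rewrite -em in J2.
have e1b : expR (- s * m) <= expR (s * c / a).
  by rewrite -(ler_pM2r Ka); apply: le_trans J2 _; rewrite [_ * K a]mulrC.
have e2b : expR (s * m) <= expR (s * c / (1 - a)).
  by rewrite -(ler_pM2r Ka); apply: le_trans J1 _; rewrite [_ * K a]mulrC.
set C := M `^ k * expR (- k).
have C0 : 0 <= C by rewrite mulr_ge0 ?powR_ge0 ?expR_ge0.
set G := fun x => (C * expR (- s * m)) * Q (a + s) x + (C * expR (s * m)) * Q (a + - s) x.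
have iG : intR G by apply: intR_lin; exact: intQ.
have pt : forall x, Q a x * `|LL x - m| `^ k <= G x.
  move=> x; rewrite /G -(Qexp a s x a01 p1) -(Qexp a (- s) x a01 p2).
  have h1 := pow_bound `|LL x - m| k M (normr_ge0 _) k0 M0; rewrite -/s -/C in h1.
  have h2 := abs_le_exp s (LL x - m) s0.
  rewrite (_ : expR (s * (LL x - m)) = expR (- s * m) * expR (s * LL x)) in h2;
    last by rewrite -expRD; congr expR; ring.
  rewrite (_ : expR (- s * (LL x - m)) = expR (s * m) * expR (- s * LL x)) in h2;
    last by rewrite -expRD; congr expR; ring.
  apply: le_trans (ler_wpM2l (Q_ge0 a x) (le_trans h1 (ler_wpM2l C0 h2))) _.
  by apply: req_le; ring.
split.
  apply: (intR_dom _ _ iG).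
    apply: measurable_funM; first exact: mQ.
    apply: measurableT_comp (measurable_powR _) _.
    apply: measurableT_comp (@normr_measurable R setT) _.
    exact: measurable_funB mLL (measurable_cst _).
  by move=> x; rewrite ger0_norm ?mulr_ge0 ?Q_ge0 ?powR_ge0 // pt.
apply: le_trans (RI_le _ iG pt) _.
  apply: (intR_dom _ _ iG).
    apply: measurable_funM; first exact: mQ.
    apply: measurableT_comp (measurable_powR _) _.
    apply: measurableT_comp (@normr_measurable R setT) _.
    exact: measurable_funB mLL (measurable_cst _).
  by move=> x; rewrite ger0_norm ?mulr_ge0 ?Q_ge0 ?powR_ge0 // pt.
rewrite /G RI_lin ?intQ // -/(K (a + s)) -/(K (a + - s)).
set P := expR (s * c / a) * expR (s * c / (1 - a)).
have T1 : expR (- s * m) * K (a + s) <= K a * P.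
  apply: le_trans (ler_pM (expR_ge0 _) (K_ge0 _) e1b E1) _.
  by apply: req_le; rewrite /P; ring.
have T2 : expR (s * m) * K (a + - s) <= K a * P.
  apply: le_trans (ler_pM (expR_ge0 _) (K_ge0 _) e2b E2) _.
  by apply: req_le; rewrite /P; ring.
have Pk : P <= expR k.
  rewrite /P -expRD ler_expR.
  have -> : s * c / a + s * c / (1 - a) = k * c / mx.
    by rewrite es; field; rewrite ?an0 ?a1n0 ?mxn0.
  by rewrite ler_pdivrMr // ler_wpM2l // ltW.
have CP : C * expR k = M `^ k by rewrite /C -mulrA -expRD addNr expR0 mulr1.
have h1 := ler_wpM2l C0 T1.
have h2 := ler_wpM2l C0 T2.
have h3 := ler_wpM2l C0 (ler_wpM2l (K_ge0 a) Pk).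
rewrite -CP.
have H := lerD (le_trans h1 h3) (le_trans h2 h3).
apply: le_trans (le_trans _ H) _; apply: req_le; ring.
Qed.


Lemma pLL1 a x : 0 < a < 1 -> Q a x * log_lr f g x = Q a x * LL x.
Proof. exact: (pLL id). Qed.

Lemma final_sec (kappa alpha : R) :
  (renyi_div nu f g (1 / 2) < +oo)%E -> 0 < kappa -> 0 < alpha -> alpha < 1 ->
  (poweR (tilted_expect nu f g alpha
            (fun x => (`|xi nu f g alpha x| `^ kappa)%:E)) (kappa^-1)
   <= (3 `^ (kappa^-1))%:E
      * maxe ((1 - alpha)%:E * renyi_div nu f g alpha) kappa%:E
      * ((alpha * (1 - alpha))^-1)%:E)%E.
Proof.
move=> hD hk ha0 ha1.
have a01 : 0 < alpha < 1 by rewrite ha0 ha1.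
have h12 : 0 < (1 / 2 : R) < 1 by apply/andP; split; lra.
have absQ : forall b, (\int[nu]_x `|(Q b x)%:E|)%E = (\int[nu]_x (Q b x)%:E)%E.
  by move=> b; apply: eq_integral => x _; rewrite gee0_abs // lee_fin Q_ge0.
have Kpos : 0 < K alpha.
  have Kh : K (1 / 2) != 0.
    by move: hD; rewrite /renyi_div hellE // eqe; case: ifPn.
  rewrite lt_neqAle K_ge0 andbT; apply/negP => /eqP K0.
  have H0 : (\int[nu]_x `|(EFin \o Q alpha) x|)%E = 0%E.
    by rewrite absQ RI_EFin ?intQ //; congr EFin; exact: esym K0.
  have mQa : forall b, measurable_fun setT (EFin \o Q b).
    by move=> b; apply/measurable_EFinP; exact: mQ.
  have := (ae_eq_integral_abs nu measurableT (mQa alpha)).1 H0.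
  move=> H; have H' : ae_eq nu setT (EFin \o Q (1 / 2)) (cst 0%E).
    apply: filterS H => x /= h hx; move: (h hx).
    rewrite (QE a01) (QE h12); case: ifPn => // _ /eqP.
    by rewrite eqe gt_eqF ?expR_gt0.
  have := (ae_eq_integral_abs nu measurableT (mQa (1 / 2))).2 H'.
  rewrite /= absQ RI_EFin ?intQ // => /eqP; rewrite eqe => /eqP K12.
  by move: Kh; rewrite /K K12 eqxx.
set mx := Num.max (- ln (K alpha)) kappa.
set M := mx / (alpha * (1 - alpha)).
set m := RI (fun x => Q alpha x * LL x) / K alpha.
have [iI bI] := main_est alpha kappa mx M m a01 hk Kpos erefl erefl erefl.
have im : intR (fun x => Q alpha x * LL x).
  apply: (intQLL alpha (alpha * (1 - alpha) / 2)); nra.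
have Tm : fine (tilted_expect nu f g alpha (fun y => (log_lr f g y)%:E)) = m.
  rewrite /tilted_expect /tilted_dens hellE //=.
  rewrite (eq_integral (fun x => ((K alpha)^-1 * (Q alpha x * LL x))%:E)).
    by rewrite RI_EFin ?intR_Zl //= RI_Zl // /m mulrC.
  move=> x _; rewrite -EFinM; congr EFin.
  rewrite -[f x `^ _ * _]/(Q alpha x) mulrAC pLL1 //; ring.
rewrite /tilted_expect /tilted_dens hellE //=.
under eq_integral do rewrite /xi Tm.
rewrite (eq_integral (fun x => ((K alpha)^-1 * (Q alpha x * `|LL x - m| `^ kappa))%:E)); last first.
  move=> x _; rewrite -EFinM; congr EFin.
  rewrite -[f x `^ _ * _]/(Q alpha x) mulrAC (pLL (fun y => `|y - m| `^ kappa)) //; ring.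
rewrite RI_EFin ?intR_Zl // RI_Zl // poweR_EFin.
rewrite /renyi_div hellE // eqe (gt_eqF Kpos) /= -EFinM.
have -> : (1 - alpha) * ((alpha - 1)^-1 * ln (K alpha)) = - ln (K alpha).
  by field; rewrite subr_eq0 lt_eqF.
rewrite -EFin_max -/mx -!EFinM lee_fin.
have mx0 : 0 < mx by apply: lt_le_trans hk _; rewrite /mx le_max lexx orbT.
have M0 : 0 <= M by rewrite /M ltW // divr_gt0 // mulr_gt0 // subr_gt0.
have H : (K alpha)^-1 * RI (fun x => Q alpha x * `|LL x - m| `^ kappa) <= 2 * M `^ kappa.
  by rewrite mulrC ler_pdivrMr.
have ki : 0 <= kappa^-1 by rewrite invr_ge0 ltW.
apply: le_trans (ge0_ler_powR ki _ _ H) _.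
- by rewrite nnegrE mulr_ge0 ?invr_ge0 ?K_ge0 // Rintegral_ge0 // => x _; rewrite mulr_ge0 ?Q_ge0 ?powR_ge0.
- by rewrite nnegrE mulr_ge0 ?powR_ge0.
rewrite powRM ?powR_ge0 // -powRrM mulfV ?gt_eqF // powRr1 //.
rewrite -mulrA -/M ler_wpM2r // ge0_ler_powR ?nnegrE //; lra.
Qed.

End main.

Theorem lemma19 (R : realType) (d : measure_display) (Y : measurableType d)
    (nu : probability Y R) (w q : probability Y R) (f g : Y -> R)
    (mf : measurable_fun setT f) (mg : measurable_fun setT g)
    (f0 : forall x, 0 <= f x) (g0 : forall x, 0 <= g x)
    (wf : forall A, measurable A -> w A = (\int[nu]_(x in A) (f x)%:E)%E)
    (qg : forall A, measurable A -> q A = (\int[nu]_(x in A) (g x)%:E)%E)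
    (hD : (renyi_div nu f g (1 / 2) < +oo)%E)
    (kappa alpha : R) (hk : 0 < kappa) (ha0 : 0 < alpha) (ha1 : alpha < 1) :
  (poweR (tilted_expect nu f g alpha
            (fun x => (`|xi nu f g alpha x| `^ kappa)%:E)) (kappa^-1)
   <= (3 `^ (kappa^-1))%:E
      * maxe ((1 - alpha)%:E * renyi_div nu f g alpha) kappa%:E
      * ((alpha * (1 - alpha))^-1)%:E)%E.
Proof.
have If : (\int[nu]_x (f x)%:E = 1)%E by rewrite -(wf setT measurableT) probability_setT.
have Ig : (\int[nu]_x (g x)%:E = 1)%E by rewrite -(qg setT measurableT) probability_setT.
have intf : nu.-integrable setT (EFin \o f).
  apply/integrableP; split; first exact/measurable_EFinP.
  rewrite (eq_integral (fun x => (f x)%:E)); first by rewrite If ltry.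
  by move=> x _; rewrite /= ger0_norm.
have intg : nu.-integrable setT (EFin \o g).
  apply/integrableP; split; first exact/measurable_EFinP.
  rewrite (eq_integral (fun x => (g x)%:E)); first by rewrite Ig ltry.
  by move=> x _; rewrite /= ger0_norm.
have If1 : Rintegral nu setT f = 1 by rewrite /Rintegral If.
have Ig1 : Rintegral nu setT g = 1 by rewrite /Rintegral Ig.
exact: (final_sec nu f g mf mg f0 g0 intf intg If1 Ig1 kappa alpha hD hk ha0 ha1).
Qed.
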